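(* Let $\epsilon>0$, $\beta\ge 0$, let $M\ge 4$ be an even integer and $N\ge 3$ an integer, and let $\mathcal A$ be the upwind Shishkin-mesh matrix described in the context. Let $x=\mathcal A^{-1}b$ and consider the multiplicative Schwarz method $x^{(k+1)}=T_{ij}x^{(k)}+v$, $k=0,1,2,\dots$, with $(i,j)\in\{(1,2),(2,1)\}$, $v=(I-T_{ij})x$, arbitrary $x^{(0)}$, and errors $e^{(k)}=x-x^{(k)}$ (with $e^{(0)}\ne 0$). Then \[ \frac{\|e^{(k+1)}\|_\infty}{\|e^{(0)}\|_\infty}\le \rho^{k}\,\|T_{ij}\|_\infty,\qquad k=0,1,2,\dots, \] where \[ \rho=\frac{\epsilon}{\epsilon+H_y},\qquad \|T_{12}\|_\infty\le\rho,\qquad \|T_{21}\|_\infty\le 1. \]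
   Context: Setting: let $\tau_y=\min\{1/2,\,2\epsilon\ln M\}$, $H_x=1/N$, $H_y=2(1-\tau_y)/M$, $h_y=2\tau_y/M$, and $m=M/2-1$. Define the scalars $d_H=-\frac{\epsilon}{H_y^2}-\frac1{H_y}$, $d=-\frac{2\epsilon}{H_y(H_y+h_y)}-\frac1{H_y}$, $d_h=-\frac{\epsilon}{h_y^2}-\frac1{h_y}$, $e_H=-\frac{\epsilon}{H_y^2}$, $e=-\frac{2\epsilon}{h_y(H_y+h_y)}$, $e_h=-\frac{\epsilon}{h_y^2}$, and $a_H=\frac{2\epsilon}{H_x^2}+\frac{2\epsilon}{H_y^2}+\frac1{H_y}+\beta$, $a=\frac{2\epsilon}{H_x^2}+\frac{2\epsilon}{H_yh_y}+\frac1{H_y}+\beta$, $a_h=\frac{2\epsilon}{H_x^2}+\frac{2\epsilon}{h_y^2}+\frac1{h_y}+\beta$. With $I$ the identity of size $N-1$, let $C_H=d_HI$, $C=dI$, $C_h=d_hI$, $B_H=e_HI$, $B=eI$, $B_h=e_hI$, and let $A_H,A,A_h$ be the $(N-1)\times(N-1)$ tridiagonal Toeplitz matrices with off-diagonal entries $-\epsilon/H_x^2$ and diagonal entries $a_H,a,a_h$. Let $\hat A_H$ (resp. $\hat A_h$) be the $m\times m$ block tridiagonal matrix with diagonal blocks $A_H$ (resp. $A_h$), subdiagonal blocks $C_H$ (resp. $C_h$) and superdiagonal blocks $B_H$ (resp. $B_h$), and $\mathcal A=\begin{bmatrix}\hat A_H & e_m\otimes B_H & 0\\ e_m^{T}\otimes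 C & A & e_1^{T}\otimes B\\ 0 & e_1\otimes C_h & \hat A_h\end{bmatrix}$, with $e_1,e_m$ the first and last canonical basis vectors of $\mathbb R^m$ and $\otimes$ the Kronecker product. (This is the upwind finite difference discretization of $-\epsilon\Delta u+u_y+\beta u=f$ on $(0,1)^2$ with Dirichlet boundary conditions on the Shishkin mesh with nodes $(iH_x,y_j)$, $y_j=jH_y$ for $j\le M/2$ and $y_j=1-(M-j)h_y$ for $j>M/2$, in lexicographic line ordering.) Let $n=N-1$, $A_1=\begin{bmatrix}\hat A_H & e_m\otimes B_H\\ e_m^{T}\otimes C & A\end{bmatrix}$, $A_2=\begin{bmatrix} A & e_1^{T}\otimes B\\ e_1\otimes C_h & \hat A_h\end{bmatrix}$, $R_1=[I_{n(m+1)}\;\,0]$, $R_2=[0\;\,I_{n(m+1)}]$, $P_i=R_i^{T}A_i^{-1}R_i\mathcal A$, $Q_i=I-P_i$, and the multiplicative Schwarz iteration matrices $T_{12}=Q_2Q_1$, $T_{21}=Q_1Q_2$. *)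

(* Defs.v *)
From HB Require Import structures.
From mathcomp Require Import all_boot all_order all_algebra.
From mathcomp Require Import reals exp.
Set Implicit Arguments. Unset Strict Implicit. Unset Printing Implicit Defensive.
Import Order.TTheory GRing.Theory Num.Theory.
Local Open Scope ring_scope.

Section Shishkin.
Variables (R : realType) (eps beta : R) (M N : nat).

Definition tau_y : R := Num.min (1 / 2) (2 * eps * ln (M%:R)).
Definition Hx : R := 1 / N%:R.
Definition Hy : R := 2 * (1 - tau_y) / M%:R.
Definition hy : R := 2 * tau_y / M%:R.
Definition mm : nat := (M %/ 2 - 1)%N.
Definition nn : nat := (N - 1)%N.

Definition d_H : R := - eps / Hy ^+ 2 - 1 / Hy.
Definition d_0 : R := - (2 * eps) / (Hy * (Hy + hy)) - 1 / Hy.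
Definition d_h : R := - eps / hy ^+ 2 - 1 / hy.
Definition e_H : R := - eps / Hy ^+ 2.
Definition e_0 : R := - (2 * eps) / (hy * (Hy + hy)).
Definition e_h : R := - eps / hy ^+ 2.
Definition a_H : R := 2 * eps / Hx ^+ 2 + 2 * eps / Hy ^+ 2 + 1 / Hy + beta.
Definition a_0 : R := 2 * eps / Hx ^+ 2 + 2 * eps / (Hy * hy) + 1 / Hy + beta.
Definition a_h : R := 2 * eps / Hx ^+ 2 + 2 * eps / hy ^+ 2 + 1 / hy + beta.

(* coefficients of block row r (r = 0 .. 2m): rows r < m are coarse lines
   (A_H, C_H, B_H), row m is the transition line (A, C, B), rows r > m are
   fine lines (A_h, C_h, B_h). *)
Definition blk_diag (r : nat) : R :=
  if (r < mm)%N then a_H else if r == mm then a_0 else a_h.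
Definition blk_sub (r : nat) : R :=
  if (r < mm)%N then d_H else if r == mm then d_0 else d_h.
Definition blk_sup (r : nat) : R :=
  if (r < mm)%N then e_H else if r == mm then e_0 else e_h.

Definition dimA : nat := (nn * (2 * mm + 1))%N.
Definition dimS : nat := (nn * (mm + 1))%N.

(* entry (p, q) of the block tridiagonal matrix; global index p corresponds to
   block (line) p %/ n and position p %% n inside the line *)
Definition Aentry (p q : nat) : R :=
  let r := (p %/ nn)%N in let i := (p %% nn)%N in
  let s := (q %/ nn)%N in let j := (q %% nn)%N in
  if r == s then
    (if i == j then blk_diag r
     else if (i.+1 == j) || (j.+1 == i) then - eps / Hx ^+ 2 else 0)
  else if (s.+1 == r) && (i == j) then blk_sub r
  else if (r.+1 == s) && (i == j) then blk_sup r
  else 0.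

Definition Amat : 'M[R]_dimA := \matrix_(p < dimA, q < dimA) Aentry p q.

Definition A1mat : 'M[R]_dimS := \matrix_(p < dimS, q < dimS) Aentry p q.
Definition A2mat : 'M[R]_dimS :=
  \matrix_(p < dimS, q < dimS) Aentry (p + nn * mm)%N (q + nn * mm)%N.

Definition R1mat : 'M[R]_(dimS, dimA) :=
  \matrix_(p < dimS, q < dimA) ((p : nat) == q)%:R.
Definition R2mat : 'M[R]_(dimS, dimA) :=
  \matrix_(p < dimS, q < dimA) ((p + nn * mm)%N == q)%:R.

Definition P1mat : 'M[R]_dimA := R1mat^T *m invmx A1mat *m R1mat *m Amat.
Definition P2mat : 'M[R]_dimA := R2mat^T *m invmx A2mat *m R2mat *m Amat.
Definition Q1mat : 'M[R]_dimA := 1%:M - P1mat.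
Definition Q2mat : 'M[R]_dimA := 1%:M - P2mat.
Definition T12 : 'M[R]_dimA := Q2mat *m Q1mat.
Definition T21 : 'M[R]_dimA := Q1mat *m Q2mat.

Definition rho : R := eps / (eps + Hy).

End Shishkin.

Definition vnorm_inf (R : realType) (p : nat) (v : 'cV[R]_p) : R :=
  \big[Num.max/0]_(i < p) `|v i 0|.
Definition mnorm_inf (R : realType) (p q : nat) (A : 'M[R]_(p, q)) : R :=
  \big[Num.max/0]_(i < p) \sum_(j < q) `|A i j|.

Fixpoint iterate (R : realType) (p : nat) (T : 'M[R]_p) (v x0 : 'cV[R]_p)
  (k : nat) : 'cV[R]_p :=
  if k is k'.+1 then T *m iterate T v x0 k' + v else x0.

(* Main.v *)
Require Import Defs.
From HB Require Import structures.
From mathcomp Require Import all_boot all_order all_algebra.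
From mathcomp Require Import reals exp.
From mathcomp Require Import ring lra zify.
Import Order.TTheory GRing.Theory Num.Theory.
Local Open Scope ring_scope.


Section Gen.
Variable R : realType.

Lemma maxprin (s : nat) (B : 'M[R]_s) (D : pred 'I_s) :
  (forall p q, p != q -> B p q <= 0) ->
  (forall p, (0 < \sum_q B p q) \/
     (0 <= \sum_q B p q /\ exists q : 'I_s, (q < p)%N /\ B p q < 0)) ->
  forall u : 'cV[R]_s, (forall p, D p -> 0 <= (B *m u) p 0) ->
  (forall p, ~~ D p -> 0 <= u p 0) -> forall p, 0 <= u p 0.
Proof.
move=> hZ hrow u hD hnD p.
case: (leP 0 (u p 0)) => // hneg; exfalso.
case: (@arg_minP _ _ _ p predT (fun i => u i 0) isT) => p1 _ hmin.
set m0 := u p1 0 in hmin.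
have m0neg : m0 < 0 by apply: le_lt_trans (hmin p isT) hneg.
suff: forall k (q : 'I_s), val q = k -> u q 0 = m0 -> False.
  by move/(_ _ p1 erefl erefl).
elim/ltn_ind => k IH q hk huq.
case hDq: (D q); last first.
  have := hnD q (negbT hDq); rewrite huq => h.
  by have := lt_le_trans m0neg h; rewrite ltxx.
have hBu := hD q hDq.
have decomp: (B *m u) q 0 = m0 * \sum_j B q j + \sum_j B q j * (u j 0 - m0).
  rewrite mxE mulr_sumr -big_split /=; apply: eq_bigr => j _; ring.
have hterm: forall j, B q j * (u j 0 - m0) <= 0.
  move=> j; case: (eqVneq j q) => [->|hjq]; first by rewrite huq subrr mulr0.
  apply: mulr_le0_ge0; first by apply: hZ; rewrite eq_sym.
  by rewrite subr_ge0; apply: hmin.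
have hsum2 : \sum_j B q j * (u j 0 - m0) <= 0.
  by apply: sumr_le0 => j _; apply: hterm.
case: (hrow q) => [hpos | [h0 [j [hjq hBj]]]].
  have : m0 * \sum_j B q j < 0 by rewrite pmulr_llt0.
  move: hBu; rewrite decomp => ? ?; lra.
case: (eqVneq (u j 0) m0) => [hj|hj].
  by apply: (IH j _ j erefl hj); rewrite -hk.
have hgt : m0 < u j 0 by rewrite lt_neqAle eq_sym hj hmin.
have hneg2 : B q j * (u j 0 - m0) < 0 by rewrite pmulr_llt0 // subr_gt0.
have : \sum_j B q j * (u j 0 - m0) < 0.
  rewrite (bigD1 j) //=.
  have : \sum_(i | i != j) B q i * (u i 0 - m0) <= 0.
    by apply: sumr_le0 => i _; apply: hterm.
  move=> ?; lra.
have : m0 * \sum_j B q j <= 0 by rewrite nmulr_rle0.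
move: hBu; rewrite decomp => ? ? ?; lra.
Qed.



Lemma vn_ge (p : nat) (v : 'cV[R]_p) i : `|v i 0| <= vnorm_inf v.
Proof. by rewrite /vnorm_inf; apply: (le_bigmax _ (fun i => `|v i 0|)). Qed.
Arguments vn_ge {p} v i.

Lemma vn_ge0 (p : nat) (v : 'cV[R]_p) : 0 <= vnorm_inf v.
Proof.
rewrite /vnorm_inf; elim/big_ind: _ => // x y hx hy.
by rewrite le_max hx.
Qed.
Arguments vn_ge0 {p} v.

Lemma vn_le (p : nat) (v : 'cV[R]_p) c :
  0 <= c -> (forall i, `|v i 0| <= c) -> vnorm_inf v <= c.
Proof. by move=> hc h; rewrite /vnorm_inf; apply: bigmax_le. Qed.

Lemma vn_pos (p : nat) (v : 'cV[R]_p) : v != 0 -> 0 < vnorm_inf v.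
Proof.
move=> hv.
have [i hi] : exists i, v i 0 != 0.
  apply/existsP; apply: contraNT hv; rewrite negb_exists => /forallP h.
  apply/eqP/matrixP => i j; rewrite ord1 mxE; exact/eqP/negbNE/h.
by rewrite (lt_le_trans _ (vn_ge v i)) // normr_gt0.
Qed.

Lemma mn_ge0 (p q : nat) (T : 'M[R]_(p, q)) : 0 <= mnorm_inf T.
Proof.
rewrite /mnorm_inf; elim/big_ind: _ => //[x y hx hy|i _].
  by rewrite le_max hx.
by apply: sumr_ge0 => j _.
Qed.

Lemma mulvn (p q : nat) (T : 'M[R]_(p, q)) v :
  vnorm_inf (T *m v) <= mnorm_inf T * vnorm_inf v.
Proof.
apply: vn_le; first by rewrite mulr_ge0 ?mn_ge0 ?vn_ge0.
move=> i; rewrite mxE.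
apply: le_trans (ler_norm_sum _ _ _) _.
apply: (@le_trans _ _ ((\sum_j `|T i j|) * vnorm_inf v)).
  rewrite mulr_suml; apply: ler_sum => j _; rewrite normrM.
  by apply: ler_wpM2l; [rewrite normr_ge0 | apply: vn_ge].
apply: ler_wpM2r; first exact: vn_ge0.
by rewrite /mnorm_inf; apply: (le_bigmax _ (fun i => \sum_j `|T i j|)).
Qed.

Lemma mn_le (p q : nat) (T : 'M[R]_(p, q)) c :
  0 <= c -> (forall v, vnorm_inf (T *m v) <= c * vnorm_inf v) -> mnorm_inf T <= c.
Proof.
move=> hc h; rewrite /mnorm_inf; apply: bigmax_le => // i _.
pose s : 'cV[R]_q := \col_j Num.sg (T i j).
have hs : vnorm_inf s <= 1.
  apply: vn_le => // j; rewrite mxE normr_sg; by case: (_ != 0).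
have e1 : \sum_j `|T i j| = (T *m s) i 0.
  by rewrite mxE; apply: eq_bigr => j _; rewrite mxE normrEsg mulrC.
rewrite e1; apply: le_trans (ler_norm _) _; apply: le_trans (vn_ge _ i) _.
apply: le_trans (h s) _; rewrite -[leRHS]mulr1; exact: ler_wpM2l.
Qed.

Lemma sum_delta n k (F : nat -> R) :
  \sum_(q < n) (if (q : nat) == k then F q else 0) = if (k < n)%N then F k else 0.
Proof.
case: ifP => hk.
  rewrite (bigD1 (Ordinal hk)) //= eqxx big1 ?addr0 // => j hj.
  rewrite ifF //; apply: contraNF hj => /eqP hjk; apply/eqP/val_inj => /=; exact hjk.
rewrite big1 // => j _; rewrite ifF //; apply: contraFF hk => /eqP <-; exact: ltn_ord.
Qed.


Lemma sum_d1 n m (k0 : 'I_n) (F : 'I_n -> R) :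
  val k0 = m -> \sum_k ((m == val k)%:R * F k) = F k0.
Proof.
move=> hk; rewrite (bigD1 k0) //= -hk eqxx mul1r big1 ?addr0 // => k hk'.
case: eqP => [e|]; last by rewrite mul0r.
by move: hk'; rewrite (_ : k = k0) ?eqxx //; apply: val_inj.
Qed.

Lemma mxsub_e (m : nat) (X Y : 'cV[R]_m) i : (X - Y) i 0 = X i 0 - Y i 0.
Proof. by rewrite !mxE. Qed.
Lemma mxadd_e (m : nat) (X Y : 'cV[R]_m) i : (X + Y) i 0 = X i 0 + Y i 0.
Proof. by rewrite !mxE. Qed.

Section Win.
Variables (s n o : nat) (hso : (s + o <= n)%N) (A : 'M[R]_n).
Definition Rg : 'M[R]_(s,n) := \matrix_(p < s, q < n) ((p + o)%N == q)%:R.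
Definition Bs := Rg *m A *m Rg^T.
Definition Qg := 1%:M - Rg^T *m invmx Bs *m Rg *m A.
Definition inwin (q : 'I_n) := (o <= q)%N && (q < o + s)%N.

Lemma Rg_mul (w : 'cV[R]_n) (p : 'I_s) (q : 'I_n) :
  val q = (p + o)%N -> (Rg *m w) p 0 = w q 0.
Proof.
move=> hq; rewrite mxE.
rewrite (eq_bigr (fun k => (((p + o)%N == val k)%:R * w k 0))); last first.
  by move=> k _; rewrite mxE.
exact: sum_d1.
Qed.

Lemma RgT_mul (y : 'cV[R]_s) (q : 'I_n) (p : 'I_s) :
  val q = (p + o)%N -> (Rg^T *m y) q 0 = y p 0.
Proof.
move=> hq; rewrite mxE.
rewrite (eq_bigr (fun k : 'I_s => ((val p == val k)%:R * y k 0))); last first.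
  by move=> k _; rewrite !mxE hq eqn_add2r eq_sym.
exact: sum_d1.
Qed.

Lemma RgT_out (y : 'cV[R]_s) (q : 'I_n) : ~~ inwin q -> (Rg^T *m y) q 0 = 0.
Proof.
move=> hq; rewrite mxE big1 // => p _; rewrite !mxE.
case: eqP => [e|]; last by rewrite mul0r.
have hp := ltn_ord p; exfalso; move/negP: hq; apply; apply/andP; rewrite -e; split; lia.
Qed.

Lemma Rg_zero_win (W : 'cV[R]_n) q : Rg *m W = 0 -> inwin q -> W q 0 = 0.
Proof.
move=> h /andP [h1 h2].
have hp : (q - o < s)%N by lia.
rewrite -(Rg_mul W (Ordinal hp) q); first by rewrite h mxE.
by rewrite /= subnK.
Qed.

Lemma Bs_entry (F : nat -> nat -> R) :
  A = \matrix_(p, q) F p q -> Bs = \matrix_(p < s, q < s) F (p + o)%N (q + o)%N.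
Proof.
move=> hA; apply/matrixP => p p'.
have hp : (p + o < n)%N by have := ltn_ord p; lia.
have hp' : (p' + o < n)%N by have := ltn_ord p'; lia.
rewrite [RHS]mxE /Bs mxE.
rewrite (eq_bigr (fun k => (((p' + o)%N == val k)%:R * (Rg *m A) p k))); last first.
  by move=> k _; rewrite !mxE mulrC.
rewrite (sum_d1 _ _ (Ordinal hp')) //.
transitivity ((Rg *m \col_k A k (Ordinal hp')) p 0).
  by rewrite !mxE; apply: eq_bigr => k _; rewrite !mxE.
by rewrite (Rg_mul _ p (Ordinal hp)) // !mxE hA !mxE.
Qed.

Lemma Qg_eq (e : 'cV[R]_n) :
  Qg *m e = e - Rg^T *m (invmx Bs *m (Rg *m (A *m e))).
Proof. by rewrite /Qg mulmxBl mul1mx !mulmxA. Qed.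

Lemma Qg_out (e : 'cV[R]_n) q : ~~ inwin q -> (Qg *m e) q 0 = e q 0.
Proof.
move=> hq; rewrite Qg_eq.
rewrite mxsub_e.
by rewrite RgT_out // subr0.
Qed.

Lemma Qg_harm (hu : Bs \in unitmx) (e : 'cV[R]_n) q : inwin q -> (A *m (Qg *m e)) q 0 = 0.
Proof.
move=> hq; apply: Rg_zero_win hq.
by rewrite Qg_eq !mulmxBr !mulmxA -/Bs mulmxV // mul1mx subrr.
Qed.

Lemma Bs_unit :
  (forall u : 'cV[R]_n, (forall q, inwin q -> (A *m u) q 0 = 0) ->
      (forall q, ~~ inwin q -> u q 0 = 0) -> u = 0) -> Bs \in unitmx.
Proof.
move=> hMP; rewrite unitmxE unitfE -det_tr.
apply/negP => /det0P [v vnz hv].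
have hz : Bs *m v^T = 0 by rewrite -[Bs]trmxK -trmx_mul hv trmx0.
have hw : Rg^T *m v^T = 0.
  apply: hMP => q hq; last exact: RgT_out.
  apply: Rg_zero_win hq; by rewrite !mulmxA -/Bs.
move/negP: vnz; apply; apply/eqP/matrixP => i j.
rewrite ord1 mxE.
have hp : (j + o < n)%N by have := ltn_ord j; lia.
have := RgT_mul v^T (Ordinal hp) j erefl.
by rewrite hw !mxE => <-.
Qed.

End Win.
End Gen.



Section Spec.
Variables (R : realType) (eps beta : R) (M N : nat).
Hypotheses (heps : 0 < eps) (hbeta : 0 <= beta)
  (hM : (4 <= M)%N) (hMeven : ~~ odd M) (hN : (3 <= N)%N).

Ltac lra' := have ? := heps; have ? := hbeta; lra.

Local Notation nn := (nn N) (only parsing).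
Local Notation mm := (mm M) (only parsing).
Local Notation HY := (Hy eps M) (only parsing).
Local Notation hY := (hy eps M) (only parsing).
Local Notation cX := (eps / Hx R N ^+ 2) (only parsing).
Local Notation rho := (rho eps M) (only parsing).

Lemma nn_gt1 : (1 < nn)%N. Proof. rewrite /Defs.nn. lia. Qed.
Lemma mm_gt0 : (0 < mm)%N. Proof. rewrite /Defs.mm; lia. Qed.

Lemma tau_pos : 0 < tau_y eps M.
Proof.
rewrite /tau_y lt_min; apply/andP; split; first lra'.
apply: mulr_gt0; first by rewrite mulr_gt0.
apply: ln_gt0; rewrite ltr1n; lia.
Qed.

Lemma tau_le : tau_y eps M <= 1/2.
Proof. by rewrite /tau_y ge_min lexx. Qed.

Lemma M_pos : 0 < (M%:R : R). Proof. rewrite ltr0n; lia. Qed.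

Lemma H_pos : 0 < HY.
Proof.
rewrite /Hy; apply: divr_gt0; last exact: M_pos.
have := tau_le; lra'.
Qed.

Lemma h_pos : 0 < hY.
Proof. rewrite /hy; apply: divr_gt0; last exact: M_pos. have := tau_pos; lra'. Qed.

Lemma Hx_pos : 0 < Hx R N.
Proof. rewrite /Hx divr_gt0 // ltr0n; lia. Qed.

Lemma c_ge0 : 0 <= cX.
Proof. apply: divr_ge0; [lra' | apply: sqr_ge0]. Qed.

Lemma rho_ge0 : 0 <= rho.
Proof. rewrite /Defs.rho; apply: divr_ge0; have := H_pos; lra'. Qed.

Lemma rho_le1 : rho <= 1.
Proof. rewrite /Defs.rho ler_pdivrMr; have := H_pos; lra'. Qed.

Lemma blk_sub_lt0 r : blk_sub eps M r < 0.
Proof.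
have hH := H_pos; have hh := h_pos.
rewrite /blk_sub; case: ifP => _; [|case: ifP => _].
- rewrite /d_H. have : 0 < eps / HY ^+ 2 by apply: divr_gt0; [|apply: exprn_gt0].
  have : 0 < 1 / HY by apply: divr_gt0.
  rewrite mulNr; lra'.
- rewrite /d_0. have : 0 < (2 * eps) / (HY * (HY + hY)) by apply: divr_gt0; [lra'| apply: mulr_gt0; lra'].
  have : 0 < 1 / HY by apply: divr_gt0.
  rewrite mulNr; lra'.
- rewrite /d_h. have : 0 < eps / hY ^+ 2 by apply: divr_gt0; [|apply: exprn_gt0].
  have : 0 < 1 / hY by apply: divr_gt0.
  rewrite mulNr; lra'.
Qed.

Lemma blk_sup_le0 r : blk_sup eps M r <= 0.
Proof.
have hH := H_pos; have hh := h_pos.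
rewrite /blk_sup; case: ifP => _; [|case: ifP => _].
- rewrite /e_H mulNr oppr_le0; apply: divr_ge0; [lra'|apply: sqr_ge0].
- rewrite /e_0 mulNr oppr_le0; apply: divr_ge0; [lra'| apply: mulr_ge0; lra'].
- rewrite /e_h mulNr oppr_le0; apply: divr_ge0; [lra'|apply: sqr_ge0].
Qed.

Lemma blk_sum r :
  blk_diag eps beta M N r - 2 * cX + blk_sub eps M r + blk_sup eps M r = beta.
Proof.
have hH := H_pos; have hh := h_pos.
have hH0 : HY != 0 by rewrite gt_eqF.
have hh0 : hY != 0 by rewrite gt_eqF.
have hHh : HY + hY != 0 by rewrite gt_eqF // addr_gt0.
have hx0 : Hx R N != 0 by rewrite gt_eqF // Hx_pos.
rewrite /blk_diag /blk_sub /blk_sup; case: ifP => _; [|case: ifP => _].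
- by rewrite /a_H /d_H /e_H; field; rewrite hH0 hx0.
- by rewrite /a_0 /d_0 /e_0; field; rewrite hH0 hh0 hHh hx0.
- by rewrite /a_h /d_h /e_h; field; rewrite hh0 hx0.
Qed.


Lemma divE r i : (i < nn)%N -> ((r * nn + i) %/ nn)%N = r.
Proof. move=> hi; rewrite divnMDl ?divn_small ?addn0 //; have := nn_gt1; lia. Qed.

Lemma modE r i : (i < nn)%N -> ((r * nn + i) %% nn)%N = i.
Proof. by move=> hi; rewrite modnMDl modn_small. Qed.

Lemma divmod_eq r i s j : (i < nn)%N -> (j < nn)%N ->
  (s * nn + j == r * nn + i)%N = (s == r) && (j == i).
Proof.
move=> hi hj; apply/eqP/andP => [e|[/eqP-> /eqP->]] //; split; apply/eqP.
  by have := congr1 (divn^~ nn) e; rewrite /= !divE.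
by have := congr1 (modn^~ nn) e; rewrite /= !modE.
Qed.

Lemma Aentry_rs r i s j : (i < nn)%N -> (j < nn)%N ->
  Aentry eps beta M N (r * nn + i) (s * nn + j) =
  if r == s then
    (if i == j then blk_diag eps beta M N r
     else if (i.+1 == j) || (j.+1 == i) then - eps / Hx R N ^+ 2 else 0)
  else if (s.+1 == r) && (i == j) then blk_sub eps M r
  else if (r.+1 == s) && (i == j) then blk_sup eps M r
  else 0.
Proof. by move=> hi hj; rewrite /Aentry /= !divE // !modE. Qed.

Lemma le5_1 (a b c d e x : R) : a <= x -> b <= 0 -> c <= 0 -> d <= 0 -> e <= 0 -> a+b+c+d+e <= x.
Proof. move=> *; lra. Qed.
Lemma le5_2 (a b c d e x : R) : a <= 0 -> b <= x -> c <= 0 -> d <= 0 -> e <= 0 -> a+b+c+d+e <= x.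
Proof. move=> *; lra. Qed.
Lemma le5_3 (a b c d e x : R) : a <= 0 -> b <= 0 -> c <= x -> d <= 0 -> e <= 0 -> a+b+c+d+e <= x.
Proof. move=> *; lra. Qed.
Lemma le5_4 (a b c d e x : R) : a <= 0 -> b <= 0 -> c <= 0 -> d <= x -> e <= 0 -> a+b+c+d+e <= x.
Proof. move=> *; lra. Qed.
Lemma le5_5 (a b c d e x : R) : a <= 0 -> b <= 0 -> c <= 0 -> d <= 0 -> e <= x -> a+b+c+d+e <= x.
Proof. move=> *; lra. Qed.
Lemma ifle0 (b : bool) (x : R) : x <= 0 -> (if b then x else 0) <= 0.
Proof. by case: b. Qed.

Ltac tn := by repeat apply: ifle0; first [assumption | exact: lexx].

Definition rowT (f : nat -> R) (p q : nat) : R :=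
  (if q == p then f (p %/ nn)%N * blk_diag eps beta M N (p %/ nn) else 0)
  + (if (nn <= p)%N then (if q == (p - nn)%N then blk_sub eps M (p %/ nn) * f (q %/ nn)%N else 0) else 0)
  + (if q == (p + nn)%N then blk_sup eps M (p %/ nn) * f (q %/ nn)%N else 0)
  + (if q == p.+1 then - cX * f (p %/ nn)%N else 0)
  + (if (0 < p)%N then (if q == p.-1 then - cX * f (p %/ nn)%N else 0) else 0).

Lemma rowT_le (f : nat -> R) (hf : forall s, 0 <= f s) r i s j :
  (i < nn)%N -> (j < nn)%N ->
  rowT f (r * nn + i) (s * nn + j) <=
  Aentry eps beta M N (r * nn + i) (s * nn + j) * f ((s * nn + j) %/ nn)%N.
Proof.
move=> hi hj; have hn := nn_gt1.
rewrite /rowT Aentry_rs // !divE //.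
have hS : blk_sub eps M r * f s <= 0 by rewrite nmulr_rle0 ?hf ?blk_sub_lt0.
have hU : blk_sup eps M r * f s <= 0 by apply: mulr_le0_ge0; [apply: blk_sup_le0 | apply: hf].
have hC : - cX * f r <= 0 by rewrite mulNr oppr_le0; apply: mulr_ge0; [apply: c_ge0 | apply: hf].
have hC' : - eps / Hx R N ^+ 2 = - cX by rewrite mulNr.
have hfr := hf r.
case: (eqVneq r s) => [ers|nrs].
  subst s.
  case: (eqVneq i j) => [eij|nij].
    subst j.
    apply: le5_1; [by rewrite eqxx mulrC| tn | tn | tn | tn].
  rewrite divmod_eq // eqxx [j == i]eq_sym (negbTE nij) /=.
  case hnb: ((i.+1 == j) || (j.+1 == i)).
    move/orP: hnb => [/eqP e|/eqP e].
      have -> : (r * nn + j == (r * nn + i).+1)%N by apply/eqP; lia.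
      apply: le5_4; [tn | tn | tn | by rewrite hC' | tn].
    have -> : (0 < r * nn + i)%N by lia.
    have -> : (r * nn + j == (r * nn + i).-1)%N by apply/eqP; lia.
    apply: le5_5; [tn | tn | tn | tn | by rewrite hC'].
  rewrite mul0r; apply: le5_1; [tn | tn | tn | tn | tn].
rewrite divmod_eq // [s == r]eq_sym (negbTE nrs) /=.
case hsub: ((s.+1 == r) && (i == j)).
  case/andP: hsub => /eqP es /eqP eij; subst r j.
  have -> : (nn <= s.+1 * nn + i)%N by lia.
  have -> : (s * nn + i == s.+1 * nn + i - nn)%N by apply/eqP; lia.
  apply: le5_2; [tn | by [] | tn | tn | tn].
case hsup: ((r.+1 == s) && (i == j)).
  case/andP: hsup => /eqP es /eqP eij; subst s j.
  have -> : (r.+1 * nn + i == r * nn + i + nn)%N by apply/eqP; lia.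
  apply: le5_3; [tn | tn | by [] | tn | tn].
rewrite mul0r; apply: le5_1; [tn | tn | tn | tn | tn].
Qed.

Lemma rowT_le' (f : nat -> R) (hf : forall s, 0 <= f s) p q :
  rowT f p q <= Aentry eps beta M N p q * f (q %/ nn)%N.
Proof.
have hn := nn_gt1.
have := rowT_le f hf (p %/ nn) (p %% nn) (q %/ nn) (q %% nn)
  (ltn_pmod _ (ltnW hn)) (ltn_pmod _ (ltnW hn)).
by rewrite -!divn_eq.
Qed.

Lemma sum_if (n : nat) (b : bool) (F : 'I_n -> R) :
  \sum_(q < n) (if b then F q else 0) = if b then \sum_(q < n) F q else 0.
Proof. by case: b => //; rewrite big1. Qed.

Local Notation dA := (dimA M N).

Lemma row_lb (f : nat -> R) (hf : forall s, 0 <= f s) r i :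
  (i < nn)%N -> (r * nn + i < dA)%N ->
  f r * (blk_diag eps beta M N r - 2 * cX)
  + (if r is 0 then 0 else blk_sub eps M r * f r.-1) + blk_sup eps M r * f r.+1
  <= \sum_(q < dA) Aentry eps beta M N (r * nn + i) q * f (q %/ nn)%N.
Proof.
move=> hi hp; have hn := nn_gt1.
have hs : \sum_(q < dA) rowT f (r * nn + i) q <=
    \sum_(q < dA) Aentry eps beta M N (r * nn + i) q * f (q %/ nn)%N.
  by apply: ler_sum => q _; exact: rowT_le'.
apply: le_trans hs.
rewrite /rowT !big_split /= !divE //.
rewrite (sum_delta _ dA (r * nn + i) (fun _ => f r * blk_diag eps beta M N r)) hp.
rewrite sum_if (sum_delta _ dA _ (fun q => blk_sub eps M r * f (q %/ nn)%N)).
rewrite (sum_delta _ dA _ (fun q => blk_sup eps M r * f (q %/ nn)%N)).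
rewrite (sum_delta _ dA _ (fun q => - cX * f r)) sum_if.
rewrite (sum_delta _ dA _ (fun q => - cX * f r)).
have hC : - cX * f r <= 0.
  by rewrite mulNr oppr_le0; apply: mulr_ge0; [apply: c_ge0 | apply: hf].
have hU : blk_sup eps M r * f r.+1 <= 0.
  by apply: mulr_le0_ge0; [apply: blk_sup_le0 | apply: hf].
have e3 : (if (r * nn + i + nn < dA)%N then blk_sup eps M r * f ((r * nn + i + nn) %/ nn)%N else 0)
   >= blk_sup eps M r * f r.+1.
  case: ifP => _ //.
  by rewrite (_ : (r * nn + i + nn = r.+1 * nn + i)%N) ?divE //; lia.
have e4 : (if ((r * nn + i).+1 < dA)%N then - cX * f r else 0) >= - cX * f r.
  by case: ifP.
have e5 : (if (0 < r * nn + i)%N then (if ((r * nn + i).-1 < dA)%N then - cX * f r else 0) else 0)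
   >= - cX * f r.
  by case: ifP => _ //; case: ifP.
have e2 : (if r is 0 then 0 else blk_sub eps M r * f r.-1) =
   (if (nn <= r * nn + i)%N then (if (r * nn + i - nn < dA)%N then
     blk_sub eps M r * f ((r * nn + i - nn) %/ nn)%N else 0) else 0).
  case: r hp {e3 hU e4 e5 hC} => [|r] hp /=.
    by rewrite mul0n add0n leqNgt hi.
  have -> : (nn <= r.+1 * nn + i)%N by lia.
  have -> : (r.+1 * nn + i - nn < dA)%N by lia.
  by rewrite (_ : (r.+1 * nn + i - nn = r * nn + i)%N) ?divE //; lia.
rewrite e2.
have -> : f r * (blk_diag eps beta M N r - 2 * cX) = f r * blk_diag eps beta M N r - 2 * (cX * f r) by ring.
move: e3 e4 e5; rewrite !mulNr.
move: (cX * f r) (f r * blk_diag eps beta M N r) => X Y.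
set T1 := (if _ then _ else _); set T2 := (if _ then _ else _); set T3 := (if _ then _ else _); set T4 := (if _ then _ else _).
clearbody T1 T2 T3 T4. move: (blk_sup eps M r * f r.+1) => B. lra'.
Qed.

Definition LB (f : nat -> R) r :=
  f r * (blk_diag eps beta M N r - 2 * cX)
  + (if r is 0 then 0 else blk_sub eps M r * f r.-1) + blk_sup eps M r * f r.+1.

Lemma row_lb_ord (f : nat -> R) (hf : forall s, 0 <= f s) (p : 'I_dA) :
  LB f (p %/ nn)%N <= \sum_(q < dA) Aentry eps beta M N p q * f (q %/ nn)%N.
Proof.
have hn := nn_gt1.
have := row_lb f hf (p %/ nn) (p %% nn) (ltn_pmod _ (ltnW hn)).
by rewrite -!divn_eq => /(_ (ltn_ord p)).
Qed.

Lemma AentryE p q : Aentry eps beta M N p q =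
  Aentry eps beta M N ((p %/ nn) * nn + p %% nn) ((q %/ nn) * nn + q %% nn).
Proof. by rewrite -!divn_eq. Qed.

Lemma Aentry_offdiag p q : p != q -> Aentry eps beta M N p q <= 0.
Proof.
move=> hpq; have hn := nn_gt1.
rewrite AentryE Aentry_rs ?ltn_pmod //; try lia.
have hS := blk_sub_lt0 (p %/ nn); have hU := blk_sup_le0 (p %/ nn).
case: eqP => [e1|_].
  case: eqP => [e2|_].
    by move: hpq; rewrite (divn_eq p nn) (divn_eq q nn) e1 e2 eqxx.
  case: ifP => _ //.
  by rewrite mulNr oppr_le0; apply: divr_ge0; [lra' | apply: sqr_ge0].
case: ifP => _; first lra'.
by case: ifP => _.
Qed.

Lemma hZ (p q : 'I_dA) : p != q -> Amat eps beta M N p q <= 0.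
Proof. by move=> h; rewrite mxE; apply: Aentry_offdiag. Qed.

Lemma blk_r0 : (0 < mm)%N ->
  (blk_diag eps beta M N 0 = a_H eps beta M N) * (blk_sub eps M 0 = d_H eps M)
  * (blk_sup eps M 0 = e_H eps M).
Proof. by move=> h; rewrite /blk_diag /blk_sub /blk_sup h. Qed.

Lemma hrow (p : 'I_dA) : (0 < \sum_q Amat eps beta M N p q) \/
  (0 <= \sum_q Amat eps beta M N p q /\
     exists q : 'I_dA, (q < p)%N /\ Amat eps beta M N p q < 0).
Proof.
have hn := nn_gt1.
have hL := row_lb_ord (fun _ => 1) (fun _ => ler01) p.
have -> : \sum_q Amat eps beta M N p q =
   \sum_(q < dA) Aentry eps beta M N p q * (fun _ => 1) (q %/ nn)%N.
  by apply: eq_bigr => q _; rewrite mxE mulr1.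
have hsum := blk_sum (p %/ nn).
have hS := blk_sub_lt0 (p %/ nn).
move: hL; rewrite /LB !mul1r !mulr1.
case e: (p %/ nn)%N => [|r] hL.
  by left; rewrite e in hsum hS; apply: lt_le_trans hL; lra'.
right; split; first by rewrite e in hsum hS; apply: le_trans hL; lra'.
have hp : (p - nn < dA)%N by have := ltn_ord p; lia.
have hpn : (nn <= p)%N by rewrite (divn_eq p nn) e; lia.
exists (Ordinal hp); split; first by rewrite /=; lia.
rewrite mxE /= AentryE.
have epn : (p - nn = r * nn + p %% nn)%N.
  by rewrite {1}(divn_eq p nn) e mulSn; lia.
have hpm : (p %% nn < nn)%N by rewrite ltn_pmod //; lia.
rewrite epn divE // modE //.
rewrite e Aentry_rs ?ltn_pmod //; try lia.
rewrite (gtn_eqF (ltnSn r)) eqxx /= eqxx; exact: blk_sub_lt0.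
Qed.

Local Notation A := (Amat eps beta M N).
Local Notation dS := (dimS M N).

Lemma MP (D : pred 'I_dA) (u : 'cV[R]_dA) :
  (forall p, D p -> 0 <= (A *m u) p 0) -> (forall p, ~~ D p -> 0 <= u p 0) ->
  forall p, 0 <= u p 0.
Proof. move=> h1 h2; exact: (@maxprin R dA A D hZ hrow u h1 h2). Qed.

Lemma MPz (D : pred 'I_dA) (u : 'cV[R]_dA) :
  (forall p, D p -> (A *m u) p 0 = 0) -> (forall p, ~~ D p -> u p 0 = 0) -> u = 0.
Proof.
move=> h1 h2.
have g1 : forall p, 0 <= u p 0.
  by apply: (MP D) => p hp; rewrite ?h1 ?h2.
have g2 := MP D (- u).
have g2' : forall p, 0 <= (- u) p 0.
  apply: g2 => p hp; rewrite ?mulmxN mxE ?h1 ?h2 ?oppr0 //.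
apply/matrixP => p k; rewrite ord1 mxE; apply/le_anti/andP; split; last exact: g1.
by have := g2' p; rewrite mxE oppr_ge0.
Qed.

Lemma cmp (D : pred 'I_dA) (u Phi : 'cV[R]_dA) :
  (forall q, D q -> (A *m u) q 0 = 0) -> (forall q, D q -> 0 <= (A *m Phi) q 0) ->
  (forall q, ~~ D q -> `|u q 0| <= Phi q 0) -> forall q, `|u q 0| <= Phi q 0.
Proof.
move=> hu hP hout.
have g1 := MP D (Phi - u).
have g2 := MP D (Phi + u).
have a1 : forall q, 0 <= (Phi - u) q 0.
  apply: g1 => q hq.
    by rewrite mulmxBr mxsub_e hu // subr0; apply: hP.
  by rewrite mxsub_e subr_ge0; have := hout q hq; rewrite ler_norml => /andP[].
have a2 : forall q, 0 <= (Phi + u) q 0.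
  apply: g2 => q hq.
    by rewrite mulmxDr mxadd_e hu // addr0; apply: hP.
  rewrite mxadd_e; have := hout q hq; rewrite ler_norml => /andP[? ?]; lra'.
move=> q; have := a1 q; have := a2 q; rewrite mxsub_e mxadd_e ler_norml => ? ?.
apply/andP; split; lra'.
Qed.

Lemma hso1 : (dS + 0 <= dA)%N.
Proof. rewrite /dimS /dimA addn0; apply: leq_mul => //; lia. Qed.

Lemma hso2eq : (dS + nn * mm = dA)%N.
Proof. rewrite /dimS /dimA -mulnDr; congr (_ * _)%N; lia. Qed.

Lemma hso2 : (dS + nn * mm <= dA)%N.
Proof. rewrite /dimS /dimA -mulnDr; apply: leq_mul => //; lia. Qed.

Lemma Q1E : Q1mat eps beta M N = Qg R dS dA 0 A.
Proof.
have eR : R1mat R M N = Rg R dS dA 0 by apply/matrixP => p q; rewrite !mxE addn0.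
have eA : A1mat eps beta M N = Bs R dS dA 0 A.
  rewrite (@Bs_entry R dS dA 0 hso1 A (Aentry eps beta M N)) //.
  by apply/matrixP => p q; rewrite !mxE !addn0.
by rewrite /Q1mat /P1mat eR eA.
Qed.

Lemma Q2E : Q2mat eps beta M N = Qg R dS dA (nn * mm) A.
Proof.
have eA : A2mat eps beta M N = Bs R dS dA (nn * mm) A.
  by rewrite (@Bs_entry R dS dA (nn * mm) hso2 A (Aentry eps beta M N)) //.
by rewrite /Q2mat /P2mat eA.
Qed.

Lemma U1 : Bs R dS dA 0 A \in unitmx.
Proof. apply: (@Bs_unit R dS dA 0 hso1 A) => u h1 h2; exact: MPz h1 h2. Qed.

Lemma U2 : Bs R dS dA (nn * mm) A \in unitmx.
Proof. apply: (@Bs_unit R dS dA (nn * mm) hso2 A) => u h1 h2; exact: MPz h1 h2. Qed.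

Definition Kp (P : pred nat) (e : 'cV[R]_dA) : R :=
  \big[Num.max/0]_(q < dA | P q) `|e q 0|.

Lemma Kp_ge (P : pred nat) (e : 'cV[R]_dA) (q : 'I_dA) : P q -> `|e q 0| <= Kp P e.
Proof. by move=> hq; rewrite /Kp; apply: (le_bigmax_cond _ (fun q : 'I_dA => `|e q 0|)). Qed.

Lemma Kp_ge0 (P : pred nat) (e : 'cV[R]_dA) : 0 <= Kp P e.
Proof. by rewrite /Kp; elim/big_ind: _ => // x y hx hy; rewrite le_max hx. Qed.

Lemma Kp_le (P : pred nat) (e : 'cV[R]_dA) c : 0 <= c -> (forall q : 'I_dA, P q -> `|e q 0| <= c) -> Kp P e <= c.
Proof. by move=> hc h; rewrite /Kp; apply: bigmax_le. Qed.

Lemma Kp_vn (P : pred nat) (e : 'cV[R]_dA) : Kp P e <= vnorm_inf e.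
Proof. by apply: Kp_le; [apply: vn_ge0 | move=> q _; apply: vn_ge]. Qed.

Lemma Aphi (f : nat -> R) K (p : 'I_dA) :
  (A *m \col_(q < dA) (K * f (q %/ nn)%N)) p 0 =
  K * \sum_(q < dA) Aentry eps beta M N p q * f (q %/ nn)%N.
Proof. by rewrite mxE mulr_sumr; apply: eq_bigr => q _; rewrite !mxE mulrCA. Qed.

Lemma LB2 r : 0 <= LB (fun _ => 1) r.
Proof.
rewrite /LB !mul1r !mulr1.
have := blk_sum r; have := blk_sub_lt0 r.
by case: r => [|r] /= ? ?; lra'.
Qed.

Lemma LB1 r : (r <= mm)%N -> 0 <= LB (fun s => rho ^+ (mm - s)) r.
Proof.
move=> hr; have hH := H_pos; have hx := Hx_pos; have hr0 := rho_ge0; have hr1 := rho_le1.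
have hm := mm_gt0.
rewrite /LB.
case: (ltnP r mm) => hlt.
  have eD : blk_diag eps beta M N r = a_H eps beta M N by rewrite /blk_diag hlt.
  have eS : blk_sub eps M r = d_H eps M by rewrite /blk_sub hlt.
  have eU : blk_sup eps M r = e_H eps M by rewrite /blk_sup hlt.
  rewrite eD eS eU.
  have key : rho * (a_H eps beta M N - 2 * cX) + rho ^+ 2 * d_H eps M + e_H eps M = rho * beta.
    rewrite /Defs.rho /a_H /d_H /e_H; field.
    by rewrite !gt_eqF // ?addr_gt0.
  have hdH : d_H eps M <= 0 by have := blk_sub_lt0 0; rewrite /blk_sub hm => ?; lra'.
  have e1 : (mm - r = (mm - r.+1).+1)%N by lia.
  rewrite e1 exprS.
  case: r hr hlt {e1 eD eS eU} => [|r] hr hlt /=.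
    have hin : 0 <= rho * (a_H eps beta M N - 2 * cX) + e_H eps M.
      have : 0 <= rho ^+ 2 * (- d_H eps M) by apply: mulr_ge0; [apply: exprn_ge0| lra'].
      have : 0 <= rho * beta by apply: mulr_ge0.
      move: key; lra'.
    set X := rho ^+ _.
    have hX : 0 <= X by apply: exprn_ge0.
    match goal with |- is_true (0 <= ?E) =>
      have -> : E = X * (rho * (a_H eps beta M N - 2 * cX) + e_H eps M) by ring end.
    exact: mulr_ge0.
  have e2 : (mm - r = (mm - r.+2).+2)%N by lia.
  rewrite e2.
  have hX : 0 <= rho ^+ (mm - r.+2) by apply: exprn_ge0.
  match goal with |- is_true (0 <= ?E) =>
    have -> : E = rho ^+ (mm - r.+2) * (rho * (a_H eps beta M N - 2 * cX) + rho ^+ 2 * d_H eps M + e_H eps M) by rewrite !exprS; ring end.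
  by rewrite key; apply: mulr_ge0 => //; apply: mulr_ge0.
have emm : r = mm by apply/eqP; rewrite eqn_leq hr hlt.
subst r.
rewrite /blk_diag /blk_sub /blk_sup ltnn eqxx subnn expr0.
have -> : (mm - mm.+1 = 0)%N by lia.
have -> : (mm - mm.-1 = 1)%N by lia.
have hs := blk_sum mm; rewrite /blk_diag /blk_sub /blk_sup ltnn eqxx in hs.
have hd : d_0 eps M <= 0 by have := blk_sub_lt0 mm; rewrite /blk_sub ltnn eqxx => ?; lra'.
have h : 0 <= (- d_0 eps M) * (1 - rho) by apply: mulr_ge0; lra'.
case e: mm hm => [|m] //= _.
rewrite expr1 !mul1r mulr1.
have -> : a_0 eps beta M N - 2 * cX + d_0 eps M * rho + e_0 eps M =
   (a_0 eps beta M N - 2 * cX + d_0 eps M + e_0 eps M) + (- d_0 eps M) * (1 - rho) by ring.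
rewrite hs; lra'.
Qed.

Local Notation Q1 := (Q1mat eps beta M N).
Local Notation Q2 := (Q2mat eps beta M N).
Local Notation K1 := (Kp (fun q => dS <= q)%N).
Local Notation K2 := (Kp (fun q => q < nn * mm)%N).

Lemma win1 (q : 'I_dA) : inwin dS dA 0 q = (q < dS)%N.
Proof. by rewrite /inwin leq0n. Qed.

Lemma win2 (q : 'I_dA) : inwin dS dA (nn * mm) q = (nn * mm <= q)%N.
Proof.
rewrite /inwin; case: (leqP (nn * mm) q) => //= _.
have := ltn_ord q; have := hso2eq; lia.
Qed.

Lemma out1 (e : 'cV[R]_dA) (q : 'I_dA) : (dS <= q)%N -> (Q1 *m e) q 0 = e q 0.
Proof. by move=> h; rewrite Q1E Qg_out // ?hso1 // win1 -leqNgt. Qed.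

Lemma out2 (e : 'cV[R]_dA) (q : 'I_dA) : (q < nn * mm)%N -> (Q2 *m e) q 0 = e q 0.
Proof. by move=> h; rewrite Q2E Qg_out // ?hso2 // win2 -ltnNge. Qed.

Lemma bound1 (e : 'cV[R]_dA) (q : 'I_dA) :
  `|(Q1 *m e) q 0| <= K1 e * rho ^+ (mm - q %/ nn).
Proof.
have hn := nn_gt1.
set Phi := \col_(q < dA) (K1 e * (fun s => rho ^+ (mm - s)) (q %/ nn)%N).
have h1 : forall k, inwin dS dA 0 k -> (A *m (Q1 *m e)) k 0 = 0.
  by move=> k hk; rewrite Q1E (@Qg_harm R dS dA 0 hso1 A U1).
have h2 : forall k, inwin dS dA 0 k -> 0 <= (A *m Phi) k 0.
  move=> k hk; rewrite Aphi; apply: mulr_ge0; first exact: Kp_ge0.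
  apply: le_trans _ (row_lb_ord (fun s => rho ^+ (mm - s)) (fun t => exprn_ge0 _ rho_ge0) k).
  apply: LB1; rewrite win1 in hk.
  rewrite -ltnS ltn_divLR; last lia.
  by move: hk; rewrite /dimS addn1 mulnC.
have h3 : forall k, ~~ inwin dS dA 0 k -> `|(Q1 *m e) k 0| <= Phi k 0.
  move=> k hk; rewrite win1 -leqNgt in hk.
  rewrite out1 // /Phi [X in _ <= X]mxE.
  have -> : (mm - k %/ nn = 0)%N.
    apply/eqP; rewrite subn_eq0; apply: ltnW.
    rewrite leq_divRL; last lia.
    by move: hk; rewrite /dimS addn1 mulnC.
  by rewrite expr0 mulr1; apply: Kp_ge.
by have := cmp _ _ _ h1 h2 h3 q; rewrite /Phi [X in _ <= X]mxE.
Qed.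

Lemma bound2 (e : 'cV[R]_dA) (q : 'I_dA) : `|(Q2 *m e) q 0| <= K2 e.
Proof.
set Phi := \col_(q < dA) (K2 e * (fun _ => 1) (q %/ nn)%N).
have h1 : forall k, inwin dS dA (nn * mm) k -> (A *m (Q2 *m e)) k 0 = 0.
  by move=> k hk; rewrite Q2E (@Qg_harm R dS dA (nn * mm) hso2 A U2).
have h2 : forall k, inwin dS dA (nn * mm) k -> 0 <= (A *m Phi) k 0.
  move=> k hk; rewrite Aphi; apply: mulr_ge0; first exact: Kp_ge0.
  apply: le_trans _ (row_lb_ord (fun _ => 1) (fun _ => ler01) k).
  exact: LB2.
have h3 : forall k, ~~ inwin dS dA (nn * mm) k -> `|(Q2 *m e) k 0| <= Phi k 0.
  move=> k hk; rewrite win2 -ltnNge in hk.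
  by rewrite out2 // /Phi [X in _ <= X]mxE mulr1; apply: Kp_ge.
by have := cmp _ _ _ h1 h2 h3 q; rewrite /Phi [X in _ <= X]mxE mulr1.
Qed.

Lemma zero2 (h0 : 'cV[R]_dA) : (forall q : 'I_dA, (q < nn * mm)%N -> h0 q 0 = 0) ->
  Q2 *m h0 = 0.
Proof.
move=> hh; apply: (@MPz (inwin dS dA (nn * mm))).
- by move=> k hk; rewrite Q2E (@Qg_harm R dS dA (nn * mm) hso2 A U2).
- by move=> k hk; rewrite out2 ?hh //; rewrite win2 -ltnNge in hk.
Qed.

Lemma rho_pow_le k : (0 < k)%N -> rho ^+ k <= rho.
Proof.
case: k => [|k] // _; rewrite exprS -[leRHS]mulr1.
apply: ler_wpM2l; first exact: rho_ge0.
by apply: exprn_ile1; [apply: rho_ge0 | apply: rho_le1].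
Qed.

Lemma rho_pow_le1 k : rho ^+ k <= 1.
Proof. by apply: exprn_ile1; [apply: rho_ge0 | apply: rho_le1]. Qed.

Lemma Q1small (v : 'cV[R]_dA) (q : 'I_dA) : (q < nn * mm)%N ->
  `|(Q1 *m v) q 0| <= rho * vnorm_inf v.
Proof.
move=> hq; have hn := nn_gt1.
apply: le_trans (bound1 v q) _; rewrite mulrC.
apply: ler_pM; [apply: exprn_ge0; apply: rho_ge0 | apply: Kp_ge0 | | apply: Kp_vn].
apply: rho_pow_le; rewrite subn_gt0 ltn_divLR; last lia.
by rewrite mulnC.
Qed.

Lemma T12_bound (v : 'cV[R]_dA) :
  vnorm_inf (T12 eps beta M N *m v) <= rho * vnorm_inf v.
Proof.
rewrite /T12 -mulmxA.
apply: vn_le; first by apply: mulr_ge0; [apply: rho_ge0 | apply: vn_ge0].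
move=> q; case: (ltnP q (nn * mm)) => hq.
  by rewrite out2 //; apply: Q1small.
apply: le_trans (bound2 _ q) _.
apply: Kp_le; first by apply: mulr_ge0; [apply: rho_ge0 | apply: vn_ge0].
by move=> k hk; apply: Q1small.
Qed.

Lemma K1Q2 (v : 'cV[R]_dA) : K1 (Q2 *m v) <= K2 v.
Proof. by apply: Kp_le; [apply: Kp_ge0 | move=> k _; apply: bound2]. Qed.

Lemma T21_bound (v : 'cV[R]_dA) : vnorm_inf (T21 eps beta M N *m v) <= K2 v.
Proof.
rewrite /T21 -mulmxA.
apply: vn_le; first by apply: Kp_ge0.
move=> q; case: (leqP dS q) => hq.
  by rewrite out1 //; apply: bound2.
apply: le_trans (bound1 _ q) _.
rewrite -[leRHS]mulr1; apply: ler_pM; [apply: Kp_ge0 | apply: exprn_ge0; apply: rho_ge0 | apply: K1Q2 | apply: rho_pow_le1].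
Qed.

Lemma K2_T21 (v : 'cV[R]_dA) : K2 (T21 eps beta M N *m v) <= rho * K2 v.
Proof.
have hn := nn_gt1.
apply: Kp_le; first by apply: mulr_ge0; [apply: rho_ge0 | apply: Kp_ge0].
move=> q hq; rewrite /T21 -mulmxA.
apply: le_trans (bound1 _ q) _; rewrite mulrC.
apply: ler_pM; [apply: exprn_ge0; apply: rho_ge0 | apply: Kp_ge0 | | apply: K1Q2].
apply: rho_pow_le; rewrite subn_gt0 ltn_divLR; last lia.
by rewrite mulnC.
Qed.

Lemma T21_pi (v : 'cV[R]_dA) :
  vnorm_inf (T21 eps beta M N *m v) <= mnorm_inf (T21 eps beta M N) * K2 v.
Proof.
set v' := \col_(q < dA) (if (q < nn * mm)%N then v q 0 else 0).
have e : T21 eps beta M N *m v = T21 eps beta M N *m v'.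
  apply/eqP; rewrite -subr_eq0 -mulmxBr /T21 -mulmxA zero2 ?mulmx0 //.
  by move=> q hq; rewrite mxsub_e mxE hq subrr.
rewrite e; apply: le_trans (mulvn _ _ _ _ _) _.
apply: ler_wpM2l; first exact: mn_ge0.
apply: vn_le; first exact: Kp_ge0.
move=> q; rewrite mxE; case: ifP => hq; first exact: Kp_ge.
by rewrite normr0; apply: Kp_ge0.
Qed.

Lemma main_spec :
  (forall T : 'M[R]_(dimA M N),
     T = T12 eps beta M N \/ T = T21 eps beta M N ->
     forall (b x0 : 'cV[R]_(dimA M N)),
       let x := invmx (Amat eps beta M N) *m b in
       let v := (1%:M - T) *m x in
       let e := fun k => x - iterate T v x0 k in
       e 0%N != 0 ->
       forall k : nat,
         vnorm_inf (e k.+1) / vnorm_inf (e 0%N)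
           <= Defs.rho eps M ^+ k * mnorm_inf T)
  /\ mnorm_inf (T12 eps beta M N) <= Defs.rho eps M
  /\ mnorm_inf (T21 eps beta M N) <= 1.
Proof.
split; last split.
- move=> T hT b x0 x v e hne k.
  have step : forall k, e k.+1 = T *m e k.
    move=> j; rewrite /e /= /v mulmxBl mul1mx mulmxBr.
    apply/matrixP => a c; rewrite !mxE; ring.
  have he0 := vn_pos _ _ _ hne.
  rewrite ler_pdivrMr //.
  have hr0 := rho_ge0.
  case: hT => hT; subst T.
    have hk : forall j, vnorm_inf (e j) <= rho ^+ j * vnorm_inf (e 0%N).
      elim => [|j IH]; first by rewrite expr0 mul1r.
      rewrite step; apply: le_trans (T12_bound _) _.
      by rewrite exprS -mulrA; apply: ler_wpM2l.
    rewrite step; apply: le_trans (mulvn _ _ _ _ _) _.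
    rewrite -mulrA mulrCA; apply: ler_wpM2l; first exact: mn_ge0.
    exact: hk.
  have hk : forall j, K2 (e j) <= rho ^+ j * K2 (e 0%N).
    elim => [|j IH]; first by rewrite expr0 mul1r.
    rewrite step; apply: le_trans (K2_T21 _) _.
    by rewrite exprS -mulrA; apply: ler_wpM2l.
  rewrite step; apply: le_trans (T21_pi _) _.
  rewrite -mulrA mulrCA; apply: ler_wpM2l; first exact: mn_ge0.
  apply: le_trans (hk k) _; apply: ler_wpM2l; first exact: exprn_ge0.
  exact: Kp_vn.
- apply: mn_le; first exact: rho_ge0.
  exact: T12_bound.
- apply: mn_le; first exact: ler01.
  by move=> u; rewrite mul1r; apply: le_trans (T21_bound u) (Kp_vn _ _).
Qed.

End Spec.


Theorem corollary5p2 (R : realType) (eps beta : R) (M N : nat)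
  (heps : 0 < eps) (hbeta : 0 <= beta)
  (hM : (4 <= M)%N) (hMeven : ~~ odd M) (hN : (3 <= N)%N) :
  (forall T : 'M[R]_(dimA M N),
     T = T12 eps beta M N \/ T = T21 eps beta M N ->
     forall (b x0 : 'cV[R]_(dimA M N)),
       let x := invmx (Amat eps beta M N) *m b in
       let v := (1%:M - T) *m x in
       let e := fun k => x - iterate T v x0 k in
       e 0%N != 0 ->
       forall k : nat,
         vnorm_inf (e k.+1) / vnorm_inf (e 0%N)
           <= rho eps M ^+ k * mnorm_inf T)
  /\ mnorm_inf (T12 eps beta M N) <= rho eps M
  /\ mnorm_inf (T21 eps beta M N) <= 1.
Proof. by apply: main_spec. Qed.
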